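(* Assume the setting of the context and fix $\Delta=(h,\Delta x)$. If $\mathbf{U}=(U_{\cdot,1},U_{\cdot,2}),\mathbf{V}=(V_{\cdot,1},V_{\cdot,2})\in B(\mathcal{A}^{\Delta x})^2$ are respectively a bounded subsolution and a bounded supersolution of the scheme, i.e. $$\mathcal{F}^\Delta_j\big(x_i,(U_{i,j},U_{i,\bar\jmath}),U_{\cdot,j}\big)\le0\quad\text{and}\quad\mathcal{F}^\Delta_j\big(x_i,(V_{i,j},V_{i,\bar\jmath}),V_{\cdot,j}\big)\ge0\qquad\forall i\in\mathbb{N},\ j=1,2,$$ then $U_{i,j}\le V_{i,j}$ for all $i\in\mathbb{N}$ and $j=1,2$.
   Context: Constants: $\rho>0$, $r<\rho$, $0<y_1<y_2$, $\gamma>1$, $\underline{x}\le0$ with $\rho\underline{x}+y_j>0$, $\lambda_1,\lambda_2\ge0$; $\bar\jmath=3-j$; $u(c)=\frac{c^{1-\gamma}}{1-\gamma}$ for $c>0$, $u(0)=-\infty$. Discretization $\Delta=(h,\Delta x)$ with $h,\Delta x>0$, $\rho h<1$, $\lambda_jh<1$. Grid $x_i=\underline{x}+i\Delta x$, $i\in\mathbb{N}=\{0,1,\dots\}$, $\mathcal{A}^{\Delta x}=\{x_i\}$; $B(\mathcal{A}^{\Delta x})$ = bounded real sequences indexed by $\mathbb{N}$. $\beta_k(x)=\max\{0,1-|x-x_k|/\Delta x\}$ for $x\ge\underline{x}$. Admissible controls $\mathcal{C}^\Delta_j(x_i)=\{c\ge0:x_i+h(rx_i+y_j-c)\ge\underline{x}\}$,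 $s_{i,j}(c)=rx_i+y_j-c$. Scheme: $$\mathcal{F}^\Delta_j(x_i,(\mathsf{q}_j,\mathsf{q}_{\bar\jmath}),\mathsf{U})=\rho\mathsf{q}_j-(1-\rho h)\lambda_j(\mathsf{q}_{\bar\jmath}-\mathsf{q}_j)-\sup_{c\in\mathcal{C}^\Delta_j(x_i)}\Big\{u(c)+\frac{(1-\rho h)(1-\lambda_jh)}{h}\Big(\sum_k\beta_k(x_i+hs_{i,j}(c))\mathsf{U}_k-\mathsf{q}_j\Big)\Big\}.$$ *)

(* Defs.v *)
From HB Require Import structures.
From mathcomp Require Import all_boot all_order all_algebra.
From mathcomp Require Import all_classical all_reals all_analysis.
Set Implicit Arguments. Unset Strict Implicit. Unset Printing Implicit Defensive.
Import Order.TTheory GRing.Theory Num.Theory.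
Import numFieldNormedType.Exports.
Local Open Scope classical_set_scope.
Local Open Scope ring_scope.

Section Scheme.
Context {R : realType}.

Definition gridx (xl dx : R) (i : nat) : R := xl + i%:R * dx.

Definition beta (xl dx : R) (k : nat) (x : R) : R :=
  Num.max 0 (1 - `|x - gridx xl dx k| / dx).

(* sum_k beta_k(z) U_k, as the limit of the partial sums (finitely many nonzero terms) *)
Definition interp (xl dx : R) (U : nat -> R) (z : R) : R :=
  limn (series (fun k => beta xl dx k z * U k) : R^nat).

Definition util (gamma c : R) : \bar R :=
  if c > 0 then ((c `^ (1 - gamma)) / (1 - gamma))%:E else -oo%E.

Definition admissible (xl h r y xi : R) : set R :=
  [set c | 0 <= c /\ xl <= xi + h * (r * xi + y - c)].

(* the scheme F^Delta_j(x_i, (qj, qjbar), U); y = y_j, lam = lambda_j *)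
Definition schemeF (rho r gamma xl h dx y lam : R)
  (xi qj qjb : R) (U : nat -> R) : \bar R :=
  ((rho * qj - (1 - rho * h) * lam * (qjb - qj))%:E -
   ereal_sup [set (util gamma c +
       (((1 - rho * h) * (1 - lam * h) / h) *
          (interp xl dx U (xi + h * (r * xi + y - c)) - qj))%:E)%E
     | c in admissible xl h r y xi])%E.

Definition bounded_seq (U : nat -> R) : Prop := exists M : R, forall i, `|U i| <= M.

End Scheme.

(* Main.v *)
Require Import Defs.
From HB Require Import structures.
From mathcomp Require Import all_boot all_order all_algebra.
From mathcomp Require Import all_classical all_reals all_analysis.
From mathcomp Require Import ring lra.
Import Order.TTheory GRing.Theory Num.Theory.
Local Open Scope ring_scope.

Section Aux.
Context {R : realType}.

Lemma max0_cases (w : R) : (0 <= w /\ Num.max 0 w = w) \/ (w < 0 /\ Num.max 0 w = 0).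
Proof.
have [h|h] := leP 0 w.
  by left; split => //; apply/max_idPr.
by right; split => //; apply/max_idPl; exact: ltW.
Qed.

Lemma abs_cases (w : R) : (0 <= w /\ `|w| = w) \/ (w < 0 /\ `|w| = - w).
Proof.
have [h|h] := leP 0 w.
  by left; split => //; rewrite ger0_norm.
by right; split => //; rewrite ltr0_norm.
Qed.

Lemma beta_ge0 xl dx k (z : R) : 0 <= beta xl dx k z.
Proof. by rewrite /beta le_max lexx. Qed.

Lemma beta_mul xl dx k (z : R) : 0 < dx ->
  dx * beta xl dx k z = Num.max 0 (dx - `|z - gridx xl dx k|).
Proof.
move=> hdx; rewrite /beta.
set w := `|z - gridx xl dx k|.
have e : dx * (1 - w / dx) = dx - w by field; rewrite gt_eqF.
case: (max0_cases (1 - w / dx)) => [[h1 ->]|[h1 ->]];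
case: (max0_cases (dx - w)) => [[h2 ->]|[h2 ->]]; rewrite ?mulr0 //.
- have := mulr_ge0 (ltW hdx) h1; rewrite e => ?; lra.
- have : 0 < dx * (w / dx - 1) by apply: mulr_gt0 => //; lra.
  have -> : dx * (w / dx - 1) = w - dx by field; rewrite gt_eqF.
  lra.
Qed.

Lemma sum_beta dx (z : R) : 0 < dx -> forall N xl,
  dx * \sum_(0 <= k < N) beta xl dx k z <= dx /\
  dx * \sum_(0 <= k < N) beta xl dx k z <= Num.max 0 (z - xl + dx).
Proof.
move=> hdx; elim=> [|N IH] xl.
  rewrite big_geq // mulr0; split; first exact: ltW.
  by rewrite le_max lexx.
rewrite big_nat_recl //.
have e : forall i, beta xl dx i.+1 z = beta (xl + dx) dx i z.
  move=> i; rewrite /beta /gridx -addn1 natrD.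
  congr (Num.max 0 (1 - `|z - _| / dx)); ring.
under eq_bigr do rewrite e.
have [ih1 ih2] := IH (xl + dx).
rewrite mulrDr beta_mul // /gridx mul0r addr0.
set S := dx * _ in ih1 ih2 *.
case: (max0_cases (z - (xl + dx) + dx)) => [[h1 e1]|[h1 e1]];
case: (max0_cases (z - xl + dx)) => [[h2 e2]|[h2 e2]];
case: (abs_cases (z - xl)) => [[h3 e3]|[h3 e3]];
case: (max0_cases (dx - `|z - xl|)) => [[h4 e4]|[h4 e4]]; split; lra.
Qed.

Lemma beta_zero_eventually xl dx (z : R) : 0 < dx ->
  exists N : nat, forall k, (N <= k)%N -> beta xl dx k z = 0.
Proof.
move=> hdx.
have h0 : 0 <= `|z - xl| / dx + 1 by apply: addr_ge0 => //; apply: divr_ge0 => //; exact: ltW.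
have hN := archi_boundP h0.
exists (Num.Def.archi_bound (`|z - xl| / dx + 1)) => k hk.
have hk' : (Num.Def.archi_bound (`|z - xl| / dx + 1))%:R <= k%:R :> R by rewrite ler_nat.
have h1 : `|z - xl| / dx + 1 < k%:R by exact: lt_le_trans hN hk'.
have h2 : `|z - xl| + dx < k%:R * dx.
  have e : (`|z - xl| / dx + 1) * dx = `|z - xl| + dx by field; rewrite gt_eqF.
  by rewrite -e ltr_pM2r.
have := beta_mul xl dx k z hdx.
rewrite /gridx.
case: (abs_cases (z - (xl + k%:R * dx))) => [[h3 e3]|[h3 e3]];
case: (abs_cases (z - xl)) => [[h4 e4]|[h4 e4]];
case: (max0_cases (dx - `|z - (xl + k%:R * dx)|)) => [[h5 e5]|[h5 e5]];
rewrite e5 => e6; try lra;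
by move/eqP: e6; rewrite mulf_eq0 gt_eqF //= => /eqP.
Qed.

Lemma interp_eq xl dx U (z : R) (N : nat) :
  (forall k, (N <= k)%N -> beta xl dx k z = 0) ->
  interp xl dx U z = \sum_(0 <= k < N) beta xl dx k z * U k.
Proof.
move=> hN; rewrite /interp; apply: norm_lim_near_cst.
near=> n.
have hn : (N <= n)%N by near: n; exists N.
rewrite /series /= (big_cat_nat (n:=N)) //=.
rewrite [X in _ + X]big1_seq ?addr0 // => k /andP[_].
rewrite mem_index_iota => /andP[hk _].
by rewrite hN // mul0r.
Unshelve. all: end_near.
Qed.

Lemma interp_le xl dx U V M (z : R) : 0 < dx -> 0 <= M ->
  (forall k, U k <= V k + M) ->
  interp xl dx U z <= interp xl dx V z + M.
Proof.
move=> hdx hM hUV.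
have [N hN] := beta_zero_eventually xl dx z hdx.
rewrite (@interp_eq xl dx U z N hN) (@interp_eq xl dx V z N hN).
have [s1 _] := sum_beta dx z hdx N xl.
have s1' : \sum_(0 <= k < N) beta xl dx k z <= 1.
  by rewrite -(ler_pM2l hdx) mulr1.
apply: (le_trans (y := \sum_(0 <= k < N) beta xl dx k z * (V k + M))).
  apply: ler_sum => k _; apply: ler_wpM2l => //; exact: beta_ge0.
under eq_bigr do rewrite mulrDr.
rewrite big_split /= -mulr_suml lerD2l.
by rewrite -[leRHS]mul1r ler_wpM2r.
Qed.

Lemma key (rho r gamma xl h dx y lam xi qU qUb qV qVb M : R) (QU QV : nat -> R) :
  0 < h -> 0 < dx -> rho * h < 1 -> 0 <= lam -> lam * h < 1 -> 0 <= M ->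
  (forall k, QU k <= QV k + M) -> qUb - qVb <= M ->
  (schemeF rho r gamma xl h dx y lam xi qU qUb QU <= 0)%E ->
  (0 <= schemeF rho r gamma xl h dx y lam xi qV qVb QV)%E ->
  (rho + (1 - rho * h) * lam + (1 - rho * h) * (1 - lam * h) / h) * (qU - qV)
    <= ((1 - rho * h) * lam + (1 - rho * h) * (1 - lam * h) / h) * M.
Proof.
move=> hh hdx hrh hl hlh hM hQ hq HU HV.
rewrite /schemeF in HU HV.
set a := (1 - rho * h) * lam in HU HV *.
set b := (1 - rho * h) * (1 - lam * h) / h in HU HV *.
have ha : 0 <= a by apply: mulr_ge0 => //; lra.
have hb : 0 <= b by apply: divr_ge0; [apply: mulr_ge0; lra | exact: ltW].
set AU := ereal_sup _ in HU.
set AV := ereal_sup _ in HV.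
set k := b * (M - (qU - qV)).
have hA : (AU <= AV + k%:E)%E.
  apply: ge_ereal_sup => x [c hc <-].
  apply: (@le_trans _ _ (util gamma c + (b * (interp xl dx QV (xi + h * (r * xi + y - c)) - qV))%:E + k%:E)%E).
    rewrite -addeA -EFinD leeD2l // lee_fin.
    have := @interp_le xl dx QU QV M (xi + h * (r * xi + y - c)) hdx hM hQ.
    move=> /(ler_wpM2l hb); rewrite /k mulrDr => H.
    rewrite !mulrDr !mulrN; rewrite !mulrDr !mulrN in H. lra.
  apply: leeD2r; apply: ereal_sup_ubound; by exists c.
move: HU; rewrite sube_le0 => HU.
move: HV; rewrite sube_ge0 ?orbT // => HV.
have : ((rho * qU - a * (qUb - qU))%:E <= (rho * qV - a * (qVb - qV) + k)%:E)%E.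
  rewrite [X in (_ <= X)%E]EFinD; apply: (le_trans HU); apply: (le_trans hA); exact: leeD2r.
rewrite lee_fin /k => H.
have H2 : a * (qUb - qVb) <= a * M by exact: ler_wpM2l.
rewrite !mulrDr !mulrDl !mulrN in H H2 *; lra.
Qed.
End Aux.

Theorem mainTheorem11 (R : realType)
  (rho r y1 y2 gamma xl lam1 lam2 h dx : R)
  (Hrho : 0 < rho) (Hr : r < rho) (Hy1 : 0 < y1) (Hy12 : y1 < y2)
  (Hgamma : 1 < gamma) (Hxl : xl <= 0)
  (Hxy1 : 0 < rho * xl + y1) (Hxy2 : 0 < rho * xl + y2)
  (Hlam1 : 0 <= lam1) (Hlam2 : 0 <= lam2)
  (Hh : 0 < h) (Hdx : 0 < dx) (Hrhoh : rho * h < 1)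
  (Hlam1h : lam1 * h < 1) (Hlam2h : lam2 * h < 1)
  (U1 U2 V1 V2 : nat -> R)
  (HU1b : bounded_seq U1) (HU2b : bounded_seq U2)
  (HV1b : bounded_seq V1) (HV2b : bounded_seq V2)
  (HU1 : forall i : nat,
     (schemeF rho r gamma xl h dx y1 lam1 (gridx xl dx i) (U1 i) (U2 i) U1 <= 0)%E)
  (HU2 : forall i : nat,
     (schemeF rho r gamma xl h dx y2 lam2 (gridx xl dx i) (U2 i) (U1 i) U2 <= 0)%E)
  (HV1 : forall i : nat,
     (0 <= schemeF rho r gamma xl h dx y1 lam1 (gridx xl dx i) (V1 i) (V2 i) V1)%E)
  (HV2 : forall i : nat,
     (0 <= schemeF rho r gamma xl h dx y2 lam2 (gridx xl dx i) (V2 i) (V1 i) V2)%E) :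
  forall i : nat, U1 i <= V1 i /\ U2 i <= V2 i.
Proof.
set D := [set d : R | exists i, d = U1 i - V1 i \/ d = U2 i - V2 i]%classic.
have [B1 hB1] := HU1b; have [B2 hB2] := HU2b.
have [C1 hC1] := HV1b; have [C2 hC2] := HV2b.
have pos : forall (f : nat -> R) B, (forall i, `|f i| <= B) -> 0 <= B.
  by move=> f B hf; apply: le_trans (hf 0%N).
have nb : forall (f : nat -> R) B i, (forall i, `|f i| <= B) -> f i <= B /\ - f i <= B.
  move=> f B j hf; split; apply: le_trans (hf j); first exact: ler_norm.
  by rewrite -normrN; exact: ler_norm.
have hsup : has_sup D.
  split; first by exists (U1 0%N - V1 0%N), 0%N; left.
  exists (B1 + C1 + B2 + C2) => d [j [->|->]].
  - have := nb _ _ j hB1; have := nb _ _ j hC1.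
    have := pos _ _ hB2; have := pos _ _ hC2; lra.
  - have := nb _ _ j hB2; have := nb _ _ j hC2.
    have := pos _ _ hB1; have := pos _ _ hC1; lra.
set M := sup D.
have hM : forall j, U1 j - V1 j <= M /\ U2 j - V2 j <= M.
  move=> j; split; apply: sup_upper_bound => //; exists j; by [left|right].
suff hM0 : M <= 0.
  move=> i; have := hM i; lra.
rewrite leNgt; apply/negP => hMp.
set a1 := (1 - rho * h) * lam1.
set b1 := (1 - rho * h) * (1 - lam1 * h) / h.
set a2 := (1 - rho * h) * lam2.
set b2 := (1 - rho * h) * (1 - lam2 * h) / h.
have ha1 : 0 <= a1 by apply: mulr_ge0 => //; lra.
have ha2 : 0 <= a2 by apply: mulr_ge0 => //; lra.
have hb1 : 0 <= b1 by apply: divr_ge0; [apply: mulr_ge0; lra | exact: ltW].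
have hb2 : 0 <= b2 by apply: divr_ge0; [apply: mulr_ge0; lra | exact: ltW].
set K := rho + a1 + b1 + a2 + b2.
have hK : 0 < K by rewrite /K; lra.
set eps := rho * M / K.
have heps : 0 < eps by apply: divr_gt0 => //; apply: mulr_gt0.
have hepsK : eps * K = rho * M by rewrite /eps divfK // gt_eqF.
have [e [j [ej|ej]] he] := sup_adherent heps hsup; rewrite -/M in he.
- have hk := @key R rho r gamma xl h dx y1 lam1 (gridx xl dx j) (U1 j) (U2 j) (V1 j) (V2 j) M U1 V1
    Hh Hdx Hrhoh Hlam1 Hlam1h (ltW hMp)
    (fun k => ltac:(have := hM k; lra)) (ltac:(have := hM j; lra)) (HU1 j) (HV1 j).
  rewrite -/a1 -/b1 -ej in hk.
  have H1 : 0 < (rho + a1 + b1) * (e - (M - eps)) by apply: mulr_gt0; lra.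
  have H2 : 0 <= (K - (rho + a1 + b1)) * eps by apply: mulr_ge0; rewrite /K; lra.
  rewrite !mulrDr !mulrDl !mulrN !mulNr in hk H1 H2 hepsK.
  rewrite /K !mulrDl in hepsK H2.
  lra.
- have hk := @key R rho r gamma xl h dx y2 lam2 (gridx xl dx j) (U2 j) (U1 j) (V2 j) (V1 j) M U2 V2
    Hh Hdx Hrhoh Hlam2 Hlam2h (ltW hMp)
    (fun k => ltac:(have := hM k; lra)) (ltac:(have := hM j; lra)) (HU2 j) (HV2 j).
  rewrite -/a2 -/b2 -ej in hk.
  have H1 : 0 < (rho + a2 + b2) * (e - (M - eps)) by apply: mulr_gt0; lra.
  have H2 : 0 <= (K - (rho + a2 + b2)) * eps by apply: mulr_ge0; rewrite /K; lra.
  rewrite !mulrDr !mulrDl !mulrN !mulNr in hk H1 H2 hepsK.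
  rewrite /K !mulrDl in hepsK H2.
  lra.
Qed.
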